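(* Let $A\in\mathcal S_n^+$ have rank $2$. Then $\operatorname{st}_+(A)=2$.
   Context: $\mathcal S_n^+$ is the set of $n\times n$ symmetric entrywise nonnegative real matrices. The SNT-rank $\operatorname{st}_+(A)$ of $A\in\mathcal S_n^+$ is the minimal $k$ such that $A=BCB^T$ with $B$ an entrywise nonnegative $n\times k$ matrix and $C$ a symmetric entrywise nonnegative $k\times k$ matrix. *)

(* Defs.v *)
From HB Require Import structures.
From mathcomp Require Import all_boot all_order all_algebra.
From mathcomp Require Import boolp reals.
Set Implicit Arguments. Unset Strict Implicit. Unset Printing Implicit Defensive.
Import Order.TTheory GRing.Theory Num.Theory.
Local Open Scope ring_scope.

Definition nonneg_mx (R : realType) (m k : nat) (M : 'M[R]_(m, k)) : Prop :=
  forall i j, 0 <= M i j.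

Definition SNn (R : realType) (n : nat) (A : 'M[R]_n) : Prop :=
  A^T = A /\ nonneg_mx A.

Definition snt_fact (R : realType) (n : nat) (A : 'M[R]_n) (k : nat) : Prop :=
  exists (B : 'M[R]_(n, k)) (C : 'M[R]_k),
    [/\ nonneg_mx B, nonneg_mx C, C^T = C & A = B *m C *m B^T].

Lemma snt_fact_exists (R : realType) (n : nat) (A : 'M[R]_n) :
  SNn A -> exists k, snt_fact A k.
Proof.
move=> [AT Anneg]; exists n, 1%:M, A; split => //.
- by move=> i j; rewrite mxE; case: (i == j).
- by rewrite trmx1 mul1mx mulmx1.
Qed.

Lemma snt_fact_exists_b (R : realType) (n : nat) (A : 'M[R]_n) :
  SNn A -> exists k, `[< snt_fact A k >].
Proof. by move=> /snt_fact_exists [k Hk]; exists k; apply/asboolP. Qed.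

Definition st_plus (R : realType) (n : nat) (A : 'M[R]_n) (HA : SNn A) : nat :=
  ex_minn (snt_fact_exists_b HA).

(* Main.v *)
From HB Require Import structures.
Require Import Defs.
From mathcomp Require Import all_boot all_order all_algebra.
From mathcomp Require Import boolp reals.
From mathcomp Require Import ring lra.
Import Order.TTheory GRing.Theory Num.Theory.
Local Open Scope ring_scope.

Section Cone.
Variable R : realType.

Lemma ex_argmax (I : finType) (P : pred I) (F : I -> R) :
  (exists i, P i) -> exists i, P i /\ forall j, P j -> F j <= F i.
Proof.
move=> [i0 Pi0].
have [i Pi H] := real_arg_maxP (F := F) Pi0 (fun i _ => num_real (F i)).
by exists i; split.
Qed.

Lemma ex_argmin (I : finType) (P : pred I) (F : I -> R) :
  (exists i, P i) -> exists i, P i /\ forall j, P j -> F i <= F j.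
Proof.
move=> [i0 Pi0].
have [i Pi H] := real_arg_minP (F := F) Pi0 (fun i _ => num_real (F i)).
by exists i; split.
Qed.

Variable n : nat.

Lemma cone_interval (u v : 'I_n -> R) :
  (forall i, 0 <= u i) -> (forall i, 0 <= v i) ->
  \sum_i u i = 1 -> \sum_i v i = 1 -> (exists i, u i != v i) ->
  exists lo hi : R, [/\ lo <= 0, 1 <= hi,
    (forall i, 0 <= u i + lo * (v i - u i)),
    (forall i, 0 <= u i + hi * (v i - u i)) &
    forall l, (forall i, 0 <= u i + l * (v i - u i)) -> lo <= l <= hi].
Proof.
move=> u0 v0 su sv [k nek].
set d := fun i => v i - u i.
have sd : \sum_i d i = 0 by rewrite /d sumrB su sv subrr.
have expos : exists i, 0 < d i.
  apply/not_existsP => H.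
  have H' : forall i, 0 <= - d i.
    by move=> i; rewrite oppr_ge0 leNgt; apply/negP => /(fun h => H i h).
  have := psumr_eq0P (P := predT) (fun i _ => H' i).
  rewrite sumrN sd oppr0 => /(_ erefl k isT) /eqP.
  by rewrite oppr_eq0 /d subr_eq0 eq_sym (negbTE nek).
have exneg : exists i, d i < 0.
  apply/not_existsP => H.
  have H' : forall i, 0 <= d i.
    by move=> i; rewrite leNgt; apply/negP => /(fun h => H i h).
  have := psumr_eq0P (P := predT) (fun i _ => H' i).
  rewrite sd => /(_ erefl k isT) /eqP.
  by rewrite /d subr_eq0 eq_sym (negbTE nek).
have [i1 [d1 H1]] := @ex_argmax _ _ (fun i => - u i / d i) expos.
have [i2 [d2 H2]] := @ex_argmin _ _ (fun i => - u i / d i) exneg.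
set lo := - u i1 / d i1. set hi := - u i2 / d i2.
have lod : lo * d i1 = - u i1 by rewrite /lo mulrVK // unitfE gt_eqF.
have hid : hi * d i2 = - u i2 by rewrite /hi mulrVK // unitfE lt_eqF.
have lo0 : lo <= 0.
  have := u0 i1; nra.
have hi1 : 1 <= hi.
  have := u0 i2; have := v0 i2; rewrite /d in d2 hid; nra.
exists lo, hi; split => //.
- move=> i; rewrite -/(d i); case: (ltrP 0 (d i)) => di.
    have := H1 i di. set r := - u i / d i => hr.
    have rd : r * d i = - u i by rewrite /r mulrVK // unitfE gt_eqF.
    have : 0 <= (lo - r) * d i by apply: mulr_ge0; [rewrite subr_ge0 | exact: ltW].
    rewrite mulrBl rd; lra.
  have := u0 i; nra.
- move=> i; rewrite -/(d i); case: (ltrP (d i) 0) => di.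
    have := H2 i di; rewrite -/hi. set r := - u i / d i => hr.
    have rd : r * d i = - u i by rewrite /r mulrVK // unitfE lt_eqF.
    have : 0 <= (hi - r) * d i by rewrite -/hi in hr; nra.
    rewrite mulrBl rd; lra.
  have := u0 i; nra.
- move=> l Hl; apply/andP; split.
    have := Hl i1; rewrite -/(d i1); nra.
  have := Hl i2; rewrite -/(d i2); nra.
Qed.


Lemma cone_comb (u v : 'I_n -> R) (lo hi : R) :
  (forall i, 0 <= u i) -> (forall i, 0 <= v i) ->
  \sum_i u i = 1 -> \sum_i v i = 1 -> lo <= 0 -> 1 <= hi ->
  (forall l, (forall i, 0 <= u i + l * (v i - u i)) -> lo <= l <= hi) ->
  forall s t, (forall i, 0 <= s * u i + t * v i) ->
  exists c1 c2, [/\ 0 <= c1, 0 <= c2 & forall i, s * u i + t * v i =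
     c1 * (u i + lo * (v i - u i)) + c2 * (u i + hi * (v i - u i))].
Proof.
move=> u0 v0 su sv lo0 hi1 Hl s t Hw.
have sw : \sum_i (s * u i + t * v i) = s + t.
  by rewrite big_split /= -!mulr_sumr su sv !mulr1.
have m0 : 0 <= s + t by rewrite -sw; apply: sumr_ge0 => i _.
case: (ltrP 0 (s + t)) => mp; last first.
  have m00 : s + t = 0 by apply/le_anti; rewrite mp m0.
  exists 0, 0; split => // i; rewrite !mul0r addr0.
  by apply: (psumr_eq0P (P := predT) (fun i _ => Hw i)) => //; rewrite sw.
set m := s + t in mp m0 sw *.
set l := t / m.
have tl : t = l * m by rewrite /l mulrVK // unitfE gt_eqF.
have sl : s = m - l * m by rewrite -tl /m addrK.
have Hl' : lo <= l <= hi.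
  apply: Hl => i.
  have := Hw i; rewrite sl tl => h.
  have e : (m - l * m) * u i + l * m * v i = m * (u i + l * (v i - u i)) by ring.
  rewrite e pmulr_rge0 // in h.
move/andP: Hl' => [Hlo Hhi].
have hl : 0 < hi - lo by lra.
exists (m * (hi - l) / (hi - lo)), (m * (l - lo) / (hi - lo)); split.
- apply: divr_ge0; last exact: ltW. apply: mulr_ge0 => //; lra.
- apply: divr_ge0; last exact: ltW. apply: mulr_ge0 => //; lra.
- move=> i; rewrite sl tl; field; lra.
Qed.


Definition o1 : 'I_2 := @Ordinal 2 1 isT.

Lemma mul2 (m : nat) (c : 'rV[R]_2) (M : 'M[R]_(2, m)) j :
  (c *m M) 0 j = c 0 0 * M 0 j + c 0 o1 * M o1 j.
Proof.
rewrite mxE big_ord_recl big_ord1.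
by have -> : lift ord0 (@ord0 0) = o1 by apply: val_inj.
Qed.

Lemma rank_snt (A : 'M[R]_n) k : snt_fact A k -> (\rank A <= k)%N.
Proof.
move=> [B [C [_ _ _ ->]]].
apply: leq_trans (mxrankM_maxl _ _) _.
apply: leq_trans (mxrankM_maxl _ _) _.
exact: rank_leq_col.
Qed.


Lemma upper (A : 'M[R]_n) : SNn A -> \rank A = 2%N -> snt_fact A 2.
Proof.
move=> [AT An] hr.
have : exists S : 'M[R]_(\rank A, n), nonneg_mx S /\ (S == A)%MS.
  exists (rowsub (maxrankfun A) A); split.
    by move=> i j; rewrite mxE; exact: An.
  exact/eqmxP/eq_maxrowsub.
rewrite hr => -[S [Sn SA]].
have Sfree : row_free S by rewrite /row_free (eqmx_rank SA) hr.
have SsubA := SA; move/andP: SsubA => [SsA AsS].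
set a := \sum_j S 0 j. set b := \sum_j S o1 j.
have pos_row : forall k : 'I_2, 0 < \sum_j S k j.
  move=> k; rewrite lt_def sumr_ge0 ?andbT; last by move=> j _; exact: Sn.
  apply/negP => /eqP h.
  have h2 : forall j, S k j = 0.
    by move=> j; apply: (psumr_eq0P (P := predT) (fun j _ => Sn k j)).
  have : row k S = 0 by apply/rowP => j; rewrite !mxE h2.
  rewrite rowE -(mul0mx 1 S) => /(row_free_inj Sfree) /matrixP /(_ 0 k).
  by rewrite !mxE !eqxx /= => /eqP; rewrite oner_eq0.
have ap : 0 < a := pos_row 0.
have bp : 0 < b := pos_row o1.
set u := fun j => S 0 j / a. set v := fun j => S o1 j / b.
have u0 : forall j, 0 <= u j by move=> j; apply: divr_ge0; [exact: Sn | exact: ltW].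
have v0 : forall j, 0 <= v j by move=> j; apply: divr_ge0; [exact: Sn | exact: ltW].
have su : \sum_j u j = 1 by rewrite /u -mulr_suml -/a mulfV // gt_eqF.
have sv : \sum_j v j = 1 by rewrite /v -mulr_suml -/b mulfV // gt_eqF.
have neuv : exists j, u j != v j.
  apply/not_existsP => H.
  have H' : forall j, u j = v j by move=> j; apply/eqP/negP/negP; apply/negP => /negP => h; apply: (H j).
  set x : 'rV_2 := \row_k (if k == 0 then b else - a).
  have : x *m S = 0 *m S.
    apply/rowP => j; rewrite mul0mx mul2 !mxE /=.
    have := H' j; rewrite /u /v => e.
    have ea : a != 0 by rewrite gt_eqF.
    have eb : b != 0 by rewrite gt_eqF.
    have : S 0 j * b = S o1 j * a.
      have -> : S 0 j = S 0 j / a * a by rewrite divfK.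
      have -> : S o1 j = S o1 j / b * b by rewrite divfK.
      rewrite e; ring.
    move=> e2; rewrite [b * _]mulrC e2; ring.
  move=> /(row_free_inj Sfree) /rowP /(_ 0); rewrite !mxE /= => /eqP.
  by rewrite gt_eqF.
have [lo [hi [lo0 hi1 b1p b2p Hl]]] := @cone_interval u v u0 v0 su sv neuv.
set Bm : 'M[R]_(2, n) := \matrix_(k, j) (if k == 0 then u j + lo * (v j - u j)
                                         else u j + hi * (v j - u j)).
have Bmn : nonneg_mx Bm by move=> k j; rewrite mxE; case: ifP.
have key : forall w : 'rV[R]_n, nonneg_mx w -> (w <= A)%MS ->
    exists c : 'rV[R]_2, nonneg_mx c /\ w = c *m Bm.
  move=> w wn wA.
  have /submxP [x wx] := submx_trans wA AsS; rewrite wx in wn *.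
  have e : forall j, (x *m S) 0 j = (x 0 0 * a) * u j + (x 0 o1 * b) * v j.
    move=> j; rewrite mul2 /u /v.
    have ea : a != 0 by rewrite gt_eqF.
    have eb : b != 0 by rewrite gt_eqF.
    by field; apply/andP; split.
  have [|c1 [c2 [c1p c2p Hc]]] := @cone_comb u v lo hi u0 v0 su sv lo0 hi1 Hl (x 0 0 * a) (x 0 o1 * b).
    by move=> i; rewrite -e; exact: (wn 0 i).
  exists (\row_k (if k == 0 then c1 else c2)); split.
    by move=> i k; rewrite mxE; case: ifP.
  apply/rowP => j; rewrite e [RHS]mul2 Hc !mxE /=.
  done.
have rowsA : forall i, exists c : 'rV[R]_2, nonneg_mx c /\ row i A = c *m Bm.
  move=> i; apply: key; last exact: row_sub.
  by move=> k j; rewrite mxE; exact: An.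
have [f Hf] := choice rowsA.
set X : 'M[R]_(n, 2) := \matrix_(i, k) f i 0 k.
have AX : A = X *m Bm.
  apply/matrixP => i j.
  have := (proj2 (Hf i)) => /rowP /(_ j); rewrite mxE => ->.
  rewrite !mxE; apply: eq_bigr => k _; rewrite mxE.
  by rewrite /X !mxE.
have Bfree : row_free Bm.
  rewrite /row_free eqn_leq rank_leq_row /= -{1}hr AX.
  exact: mxrankM_maxr.
have [Q BQ] := row_freeP Bfree.
have XQ : X = A *m Q by rewrite AX -mulmxA BQ mulmx1.
have colsX : forall k, exists c : 'rV[R]_2, nonneg_mx c /\ row k X^T = c *m Bm.
  move=> k; apply: key.
    by move=> i j; rewrite !mxE; case: (Hf j) => + _; apply.
  by rewrite XQ trmx_mul AT row_mul submxMl.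
have [g Hg] := choice colsX.
set Y : 'M[R]_2 := \matrix_(k, l) g k 0 l.
have XY : X^T = Y *m Bm.
  apply/matrixP => i j.
  have := (proj2 (Hg i)) => /rowP /(_ j); rewrite mxE => ->.
  rewrite !mxE; apply: eq_bigr => k _; rewrite mxE.
  by rewrite /Y !mxE.
have AY : A = Bm^T *m Y *m Bm.
  by rewrite -AT {1}AX trmx_mul XY mulmxA.
have YQ : Y = Q^T *m A *m Q.
  by rewrite AY !mulmxA -trmx_mul BQ trmx1 mul1mx -mulmxA BQ mulmx1.
exists Bm^T, Y; split.
- by move=> i j; rewrite mxE; exact: Bmn.
- by move=> i j; rewrite mxE; case: (Hg i) => + _; apply.
- by rewrite YQ !trmx_mul trmxK AT mulmxA.
- by rewrite trmxK.
Qed.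

Theorem main_st (A : 'M[R]_n) (HA : SNn A) : \rank A = 2%N -> st_plus HA = 2%N.
Proof.
move=> hr; rewrite /st_plus; case: ex_minnP => m /asboolP Hm Hmin.
apply/eqP; rewrite eqn_leq; apply/andP; split.
  by apply: Hmin; apply/asboolP; exact: upper.
by rewrite -hr; exact: rank_snt.
Qed.


End Cone.

Theorem mainTheorem6 (R : realType) (n : nat) (A : 'M[R]_n) (HA : SNn A) :
  \rank A = 2%N -> st_plus HA = 2%N.
Proof. exact: main_st. Qed.
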